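(* In the two-source game ($m=2$) with $n_1\ge n_2$, if the pure strategy profile in which all users choose the direct path ($u_1=n_1$, $u_2=n_2$) is optimal (maximizes $TR$), then it is also a Nash equilibrium.
   Context: Two-source network: sources $s_1,s_2$ and destination $d$; source $s_i$ has a set $N_i$ of $n_i$ users. Each user generates an independent Poisson flow of packets of rate $\phi>0$; each direct link $(s_i,d)$ has service rate $\mu>0$; the sidelink between $s_1$ and $s_2$ loses packets independently with probability $q\in[0,1]$, and $\bar q=1-q$. Only pure strategies: a user of $N_1$ chooses DP $(s_1,d)$ or IP $(s_1,s_2,d)$; a user of $N_2$ chooses DP $(s_2,d)$ or IP $(s_2,s_1,d)$. With $u_i$ users of $N_i$ on DP, $T_1=u_1\phi+(n_2-u_2)\bar q\phi$, $T_2=u_2\phi+(n_1-u_1)\bar q\phi$ and $TR=\sum_i\frac{\mu T_i}{T_i+\mu}$. The loss rate of a user of $N_i$ is $\phi\frac{T_i}{T_i+\mu}$ on DP and $\phi\left(q+\bar q\frac{T_j}{T_j+\mu}\right)$ on IP to $s_j$. A Nash equilibrium is a pure profile in which no user can strictly decrease its loss rate by unilaterally switching its route. *)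

(* Defs.v *)
From Stdlib Require Import Reals Lra Lia.
Open Scope R_scope.

(* A pure profile is described (users within a class
   being identical) by u1 = number of users of N_1 on DP, u2 = number of
   users of N_2 on DP, with 0 <= u_i <= n_i.  The remaining n_i - u_i users
   of N_i use IP. *)

Definition T1 (phi q : R) (n1 n2 u1 u2 : nat) : R :=
  INR u1 * phi + INR (n2 - u2) * (1 - q) * phi.
Definition T2 (phi q : R) (n1 n2 u1 u2 : nat) : R :=
  INR u2 * phi + INR (n1 - u1) * (1 - q) * phi.

Definition TR (phi mu q : R) (n1 n2 u1 u2 : nat) : R :=
  mu * T1 phi q n1 n2 u1 u2 / (T1 phi q n1 n2 u1 u2 + mu)
  + mu * T2 phi q n1 n2 u1 u2 / (T2 phi q n1 n2 u1 u2 + mu).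

Definition loss1_DP phi mu q n1 n2 u1 u2 : R :=
  phi * (T1 phi q n1 n2 u1 u2 / (T1 phi q n1 n2 u1 u2 + mu)).
Definition loss1_IP phi mu q n1 n2 u1 u2 : R :=
  phi * (q + (1 - q) * (T2 phi q n1 n2 u1 u2 / (T2 phi q n1 n2 u1 u2 + mu))).
Definition loss2_DP phi mu q n1 n2 u1 u2 : R :=
  phi * (T2 phi q n1 n2 u1 u2 / (T2 phi q n1 n2 u1 u2 + mu)).
Definition loss2_IP phi mu q n1 n2 u1 u2 : R :=
  phi * (q + (1 - q) * (T1 phi q n1 n2 u1 u2 / (T1 phi q n1 n2 u1 u2 + mu))).

Definition admissible (n1 n2 u1 u2 : nat) : Prop := (u1 <= n1)%nat /\ (u2 <= n2)%nat.

(* Pure Nash equilibrium: no user can strictly decrease its loss rate by a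
   unilateral switch (the deviation changes the profile by one user). *)
Definition nash (phi mu q : R) (n1 n2 u1 u2 : nat) : Prop :=
  admissible n1 n2 u1 u2 /\
  ((0 < u1)%nat -> ~ (loss1_IP phi mu q n1 n2 (u1 - 1) u2 < loss1_DP phi mu q n1 n2 u1 u2)) /\
  ((u1 < n1)%nat -> ~ (loss1_DP phi mu q n1 n2 (u1 + 1) u2 < loss1_IP phi mu q n1 n2 u1 u2)) /\
  ((0 < u2)%nat -> ~ (loss2_IP phi mu q n1 n2 u1 (u2 - 1) < loss2_DP phi mu q n1 n2 u1 u2)) /\
  ((u2 < n2)%nat -> ~ (loss2_DP phi mu q n1 n2 u1 (u2 + 1) < loss2_IP phi mu q n1 n2 u1 u2)).

Definition optimal (phi mu q : R) (n1 n2 u1 u2 : nat) : Prop :=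
  admissible n1 n2 u1 u2 /\
  forall v1 v2, admissible n1 n2 v1 v2 -> TR phi mu q n1 n2 v1 v2 <= TR phi mu q n1 n2 u1 u2.

(* Main.v *)
Require Import Defs.
From Stdlib Require Import Reals Lra Lia.
Open Scope R_scope.
Lemma key (x b d mu q : R) : 0 < d -> 0 < mu -> 0 <= q <= 1 -> 0 <= x -> 0 <= b ->
  (b <= x \/ b = x + d) ->
  mu*x/(x+mu) + mu*(b+(1-q)*d)/(b+(1-q)*d+mu) <= mu*(x+d)/(x+d+mu) + mu*b/(b+mu) ->
  (x+d)/(x+d+mu) <= q + (1-q)*((b+(1-q)*d)/(b+(1-q)*d+mu)).
Proof.
  intros Hd Hm Hq Hx Hb Hc H.
  set (c := (1-q)*d) in *.
  assert (Hc0 : 0 <= c) by (unfold c; nra).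
  assert (Hgoal : (1-q)*(x+d+mu) <= b+c+mu -> (x+d)/(x+d+mu) <= q + (1-q)*((b+c)/(b+c+mu))).
  { intro G.
    assert (E : q + (1-q)*((b+c)/(b+c+mu)) - (x+d)/(x+d+mu)
               = mu*((b+c+mu) - (1-q)*(x+d+mu))/((x+d+mu)*(b+c+mu))) by (field; lra).
    assert (0 <= mu*((b+c+mu) - (1-q)*(x+d+mu))/((x+d+mu)*(b+c+mu))).
    { apply Rmult_le_pos. nra. left. apply Rinv_0_lt_compat. nra. }
    lra. }
  apply Hgoal. destruct Hc as [Hc|Hc].
  - assert (E : mu*x/(x+mu) + mu*(b+c)/(b+c+mu) - (mu*(x+d)/(x+d+mu) + mu*b/(b+mu))
       = mu*mu*(c*(x+mu)*(x+d+mu) - d*(b+mu)*(b+c+mu)) / ((x+mu)*(x+d+mu)*(b+mu)*(b+c+mu)))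
      by (field; lra).
    assert (N : c*(x+mu)*(x+d+mu) - d*(b+mu)*(b+c+mu) <= 0).
    { destruct (Rle_or_lt (c*(x+mu)*(x+d+mu) - d*(b+mu)*(b+c+mu)) 0) as [h|h]; auto.
      assert (0 < mu*mu*(c*(x+mu)*(x+d+mu) - d*(b+mu)*(b+c+mu)) / ((x+mu)*(x+d+mu)*(b+mu)*(b+c+mu))).
      { apply Rdiv_lt_0_compat. apply Rmult_lt_0_compat; nra.
        repeat apply Rmult_lt_0_compat; lra. }
      lra. }
    assert (N2 : c*(x+mu)*(x+d+mu) <= d*(x+mu)*(b+c+mu)).
    { assert (d*(b+mu)*(b+c+mu) <= d*(x+mu)*(b+c+mu)).
      { apply Rmult_le_compat_r. lra. apply Rmult_le_compat_l; lra. }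
      lra. }
    assert (N3 : c*(x+d+mu) <= d*(b+c+mu)).
    { apply (Rmult_le_reg_l (x+mu)). lra. nra. }
    apply (Rmult_le_reg_l d). lra. unfold c in N3 |- *. nra.
  - subst b. unfold c. nra.
Qed.
Lemma fmono (y z mu : R) : 0 < mu -> 0 <= y <= z -> y/(y+mu) <= z/(z+mu).
Proof.
  intros Hm Hy.
  assert (E : z/(z+mu) - y/(y+mu) = mu*(z-y)/((z+mu)*(y+mu))) by (field; lra).
  assert (0 <= mu*(z-y)/((z+mu)*(y+mu))).
  { apply Rmult_le_pos. nra. left. apply Rinv_0_lt_compat. nra. }
  lra.
Qed.

Lemma f_le1 (y mu : R) : 0 < mu -> 0 <= y -> 0 <= y/(y+mu) <= 1.
Proof.
  intros Hm Hy. split.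
  - apply Rmult_le_pos. lra. left. apply Rinv_0_lt_compat. lra.
  - apply (Rmult_le_reg_r (y+mu)). lra. field_simplify; lra.
Qed.

Theorem corollary2 (phi mu q : R) (n1 n2 : nat) :
  0 < phi -> 0 < mu -> 0 <= q <= 1 -> (n2 <= n1)%nat ->
  optimal phi mu q n1 n2 n1 n2 -> nash phi mu q n1 n2 n1 n2.
Proof.
  intros Hp Hm Hq Hn [Ha Hopt].
  assert (Hn1 : 0 <= INR n1) by apply pos_INR.
  assert (Hn2 : 0 <= INR n2) by apply pos_INR.
  unfold nash; split; [exact Ha|].
  split; [|split; [|split]].
  - intros H1. destruct n1 as [|k]; [lia|].
    assert (Hadm : admissible (S k) n2 (S k - 1) n2) by (split; lia).
    specialize (Hopt _ _ Hadm).
    unfold TR, T1, T2 in Hopt. unfold loss1_IP, loss1_DP, T1, T2.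
    replace (S k - 1)%nat with k in * by lia.
    replace (S k - k)%nat with 1%nat in * by lia.
    rewrite !Nat.sub_diag in *. change (INR 0) with 0 in *. change (INR 1) with 1 in *. rewrite S_INR in *.
    assert (Hk : 0 <= INR k) by apply pos_INR.
    pose proof (key (INR k * phi) (INR n2 * phi) phi mu q Hp Hm Hq) as K.
    assert (Hle : INR n2 * phi <= INR k * phi \/ INR n2 * phi = INR k * phi + phi).
    { destruct (Nat.eq_dec n2 (S k)) as [e|e].
      - right. subst n2. rewrite S_INR. ring.
      - left. apply Rmult_le_compat_r. lra. apply le_INR. lia. }
    assert (K' := K ltac:(apply Rmult_le_pos; lra) ltac:(apply Rmult_le_pos; lra) Hle).
    replace (INR k * phi + 0 * (1 - q) * phi) with (INR k * phi) in Hopt by ring.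
    replace (INR n2 * phi + 1 * (1 - q) * phi) with (INR n2 * phi + (1-q)*phi) in * by ring.
    replace ((INR k + 1) * phi + 0 * (1 - q) * phi) with (INR k * phi + phi) in * by ring.
    replace (INR n2 * phi + 0 * (1 - q) * phi) with (INR n2 * phi) in * by ring.
    assert (K2 := K' ltac:(unfold Rdiv in *; lra)).
    intro C. apply Rmult_lt_reg_l in C; lra.
  - intros H; lia.
  - intros H2. destruct n2 as [|k]; [lia|].
    unfold loss2_IP, loss2_DP, T1, T2.
    replace (S k - 1)%nat with k by lia.
    replace (S k - k)%nat with 1%nat by lia.
    rewrite !Nat.sub_diag. change (INR 0) with 0. change (INR 1) with 1.
    set (y := INR (S k) * phi + 0 * (1 - q) * phi).
    set (z := INR n1 * phi + 1 * (1 - q) * phi).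
    assert (Hyz : 0 <= y <= z).
    { unfold y, z. split. nra.
      assert (INR (S k) <= INR n1) by (apply le_INR; lia). nra. }
    pose proof (fmono y z mu Hm Hyz).
    pose proof (f_le1 z mu Hm ltac:(lra)).
    intro C. apply Rmult_lt_reg_l in C; [|lra]. assert (0 <= q * (1 - z/(z+mu))) by (apply Rmult_le_pos; lra). nra.
  - intros H; lia.
Qed.
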